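(* Let $k\ge 3$ and let $\mathcal C_k=S(123,\,(k-1)(k-2)\cdots 21(k+1)k,\,k(k-1)\cdots 21(k+1))$. If $\pi\in\mathcal C_k\cap S_n$ with $n\ge1$ and $\pi_l=n$, then $l\le k$. Moreover, for every $n\ge 0$, $|\mathcal C_k\cap S_n|$ equals the number of nodes at level $n$ of the generating tree defined by the succession rule with axiom $(1)$ and productions $$(1)\rightsquigarrow(2),\qquad (h)\rightsquigarrow(2)(3)\cdots(h)(h+1)\ \ \text{for } 2\le h<k,\qquad (k)\rightsquigarrow(2)(3)\cdots(k-1)(k-1)(k).$$ *)

(* Defs.v *)
(* Permutations in one-line notation as sequences of nats. *)
From mathcomp Require Import all_boot.
Set Implicit Arguments. Unset Strict Implicit. Unset Printing Implicit Defensive.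

Definition order_iso (s t : seq nat) : bool :=
  (size s == size t) &&
  [forall i : 'I_(size s), forall j : 'I_(size s),
     (nth 0 s i < nth 0 s j) == (nth 0 t i < nth 0 t j)].

Definition contains (p sigma : seq nat) : bool :=
  [exists m : (size p).-tuple bool, order_iso (mask m p) sigma].

Definition avoids_all (pats : seq (seq nat)) (p : seq nat) : bool :=
  all (fun sigma => ~~ contains p sigma) pats.

Definition is_perm_n (n : nat) (p : seq nat) : bool := perm_eq p (iota 1 n).

Definition pat123 : seq nat := [:: 1; 2; 3].
Definition patA (k : nat) : seq nat := rev (iota 1 k.-1) ++ [:: k.+1; k].
Definition patB (k : nat) : seq nat := rev (iota 1 k) ++ [:: k.+1].

Definition C (k : nat) : seq (seq nat) := [:: pat123; patA k; patB k].

Definition inC (k : nat) (p : seq nat) : bool := avoids_all (C k) p.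

Definition countC (k n : nat) : nat := count (inC k) (permutations (iota 1 n)).

(* Succession rule: (1) ~> (2); (h) ~> (2)...(h+1) for 2 <= h < k;
   (k) ~> (2)(3)...(k-1)(k-1)(k). Other labels never occur. *)
Definition children (k h : nat) : seq nat :=
  if h == 1 then [:: 2]
  else if h < k then iota 2 h
  else if h == k then iota 2 (k - 2) ++ [:: k.-1; k]
  else [::].

Fixpoint level (k n : nat) : seq nat :=
  match n with
  | 0 => [:: 1]
  | n'.+1 => flatten (map (children k) (level k n'))
  end.

Definition tree_count (k n : nat) : nat := size (level k n).

(* Main.v *)
Require Import Defs.
From mathcomp Require Import all_boot.
From mathcomp Require Import zify.
Set Implicit Arguments. Unset Strict Implicit. Unset Printing Implicit Defensive.

Definition dec (s : seq nat) := sorted (fun a b => b < a) s.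

Lemma gt_trans : transitive (fun a b : nat => b < a).
Proof. by move=> y x z /= h1 h2; exact: ltn_trans h2 h1. Qed.

Lemma dec_cmp d i j : dec d -> i < size d -> j < size d ->
  (nth 0 d i < nth 0 d j) = (j < i).
Proof.
move=> hd hi hj; case: (ltngtP i j) => h.
- have := sorted_ltn_nth gt_trans 0 hd i j hi hj h => /= h2.
  by rewrite ltnNge ltnW.
- by have := sorted_ltn_nth gt_trans 0 hd j i hj hi h.
- by rewrite h ltnn.
Qed.

Lemma oisoP s t : size s = size t ->
  (forall i j, i < size s -> j < size s ->
     (nth 0 s i < nth 0 s j) = (nth 0 t i < nth 0 t j)) -> order_iso s t.
Proof.
move=> hs h; apply/andP; split; first by rewrite hs.
apply/forallP=> i; apply/forallP=> j; apply/eqP; apply: h; exact: ltn_ord.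
Qed.

Lemma oiso_cmp s t i j : order_iso s t -> i < size s -> j < size s ->
  (nth 0 s i < nth 0 s j) = (nth 0 t i < nth 0 t j).
Proof.
case/andP=> _ /forallP h hi hj.
by have /forallP /(_ (Ordinal hj)) /eqP := h (Ordinal hi).
Qed.

Lemma oiso_size s t : order_iso s t -> size s = size t.
Proof. by case/andP=> /eqP. Qed.

Lemma containsP1 p s : contains p s -> exists2 q, subseq q p & order_iso q s.
Proof. by case/existsP=> m h; exists (mask m p) => //; exact: mask_subseq. Qed.

Lemma containsP2 p s q : subseq q p -> order_iso q s -> contains p s.
Proof.
case/subseqP=> m hm -> h; apply/existsP.
have hm' : size m == size p by rewrite hm.
by exists (Tuple hm').
Qed.

Lemma contains_sub p p' s : subseq p p' -> contains p s -> contains p' s.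
Proof.
move=> hp /containsP1 [q hq ho]; apply: containsP2 ho.
exact: subseq_trans hq hp.
Qed.

Lemma cmpB d x i j : dec d -> all (fun y => y < x) d ->
  i < (size d).+1 -> j < (size d).+1 ->
  (nth 0 (d ++ [:: x]) i < nth 0 (d ++ [:: x]) j) =
  (i < size d) && ((j < size d) ==> (j < i)).
Proof.
move=> hd hall hi hj; rewrite !nth_cat.
case: (ltnP i (size d)) => hi'; case: (ltnP j (size d)) => hj' /=.
- exact: dec_cmp.
- have -> : j - size d = 0 by lia.
  by apply: (allP hall); exact: mem_nth.
- have -> : i - size d = 0 by lia.
  by rewrite ltnNge ltnW // (allP hall) // mem_nth.
- have -> : i - size d = 0 by lia.
  have -> : j - size d = 0 by lia.
  by rewrite ltnn.
Qed.

Lemma eqF (a b : nat) : a <> b -> (a == b) = false.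
Proof. by move/eqP/negbTE. Qed.
Lemma eqT (a b : nat) : a = b -> (a == b) = true.
Proof. by move=> ->; rewrite eqxx. Qed.

Lemma cmpA d x y i j : dec d -> all (fun z => z < y) d -> y < x ->
  i < (size d).+2 -> j < (size d).+2 ->
  (nth 0 (d ++ [:: x; y]) i < nth 0 (d ++ [:: x; y]) j) =
  if i < size d then (j < size d) ==> (j < i)
  else (i == (size d).+1) && (j == size d).
Proof.
move=> hd hall hyx hi hj; rewrite !nth_cat.
have hm : forall z, z \in d -> z < y by move=> z hz; apply: (allP hall).
case: (ltnP i (size d)) => hi'; case: (ltnP j (size d)) => hj' /=.
- exact: dec_cmp.
- have hd' := hm _ (mem_nth 0 hi').
  have [e|e] : j - size d = 0 \/ j - size d = 1 by lia.
  + by rewrite e /=; apply: ltn_trans hd' hyx.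
  + by rewrite e /=.
- have hd' := hm _ (mem_nth 0 hj').
  have [e|e] : i - size d = 0 \/ i - size d = 1 by lia.
  + rewrite e /= (eqF (a:=i)); last lia. rewrite ltnNge ltnW //. exact: ltn_trans hd' hyx.
  + rewrite e /= (eqF (a:=j)); last lia. by rewrite andbF ltnNge ltnW.
- have E : i - size d = 0 \/ i - size d = 1 by lia.
  have F : j - size d = 0 \/ j - size d = 1 by lia.
  case: E => e; case: F => f.
  + rewrite e f /= (eqF (a:=i)); last lia. by rewrite ltnn.
  + rewrite e f /= (eqF (a:=i)); last lia. by rewrite ltnNge ltnW.
  + rewrite e f /= (eqT (a:=i)); last lia. rewrite (eqT (a:=j)) //; lia.
  + rewrite e f /= (eqF (a:=j)); last lia. by rewrite andbF ltnn.
Qed.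

Lemma subseq_split0 (q a b : seq nat) x : subseq q (a ++ x :: b) ->
  exists m1 mx m3, q = mask m1 a ++ (if mx then x :: mask m3 b else mask m3 b).
Proof.
case/subseqP=> m hm ->.
have hsa : size (take (size a) m) = size a.
  by rewrite size_takel // hm size_cat leq_addr.
rewrite -(cat_take_drop (size a) m) mask_cat //.
case E: (drop (size a) m) => [|mx m3].
  have : size (drop (size a) m) = (size b).+1 by rewrite size_drop hm size_cat /= addnS subSn ?leq_addr // addKn.
  by rewrite E.
exists (take (size a) m), mx, m3; by case: mx E.
Qed.

Lemma subseq_split1 (q a b : seq nat) x : subseq q (a ++ x :: b) ->
  x \notin a -> x \notin b -> x \in q ->
  exists q1 q2, [/\ q = q1 ++ x :: q2, subseq q1 a & subseq q2 b].
Proof.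
move=> /subseq_split0 [m1 [mx [m3 ->]]] ha hb.
case: mx.
  by move=> _; exists (mask m1 a), (mask m3 b); split => //; exact: mask_subseq.
rewrite mem_cat => /orP [] /mem_mask h.
  by rewrite h in ha.
by rewrite h in hb.
Qed.

Lemma subseq_split2 (q a b : seq nat) x : subseq q (a ++ x :: b) ->
  x \notin q -> subseq q (a ++ b).
Proof.
move=> /subseq_split0 [m1 [mx [m3 ->]]].
case: mx; first by rewrite mem_cat mem_head orbT.
by move=> _; apply: cat_subseq; exact: mask_subseq.
Qed.

Lemma notdec s : uniq s -> ~~ dec s -> exists a b, subseq [:: a; b] s /\ a < b.
Proof.
elim: s => [|x s IH] hu hnd; first by [].
case: s IH hu hnd => [|y s'] IH hu hnd; first by [].
case hyx: (y < x).
  have hnd' : ~~ dec (y :: s') by move: hnd; rewrite /dec /= hyx.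
  case/andP: hu => _ hu.
  have [a [b [hs hab]]] := IH hu hnd'.
  exists a, b; split => //; apply: (subseq_trans hs); exact: subseq_cons.
case/andP: hu; rewrite inE negb_or => /andP [hxy _] _.
exists x, y; split; first exact: (prefix_subseq [:: x; y] s').
move/negbT: hyx; rewrite -leqNgt leq_eqVlt => /orP [/eqP e|//].
by rewrite e eqxx in hxy.
Qed.

Lemma dec_head s z : dec s -> z \in s -> z <= nth 0 s 0.
Proof.
case: s => [|x s] //= hd; rewrite inE => /orP [/eqP -> //|hz].
have := order_path_min gt_trans hd => /allP /(_ z hz) /= h.
exact: ltnW.
Qed.

Fixpoint drun (s : seq nat) : nat :=
  match s with
  | [::] => 0
  | x :: s' => match s' with
               | [::] => 1
               | y :: _ => if y < x then (drun s').+1 else 1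
               end
  end.

Lemma drun_size s : drun s <= size s.
Proof.
elim: s => [|x s IH] //=; case: s IH => [|y s] //= IH.
by case: ifP => _ //; lia.
Qed.

Lemma drun_pos x s : 0 < drun (x :: s).
Proof. by case: s => [|y s] //=; case: ifP. Qed.

Lemma dec_take_drun s j : j <= size s -> dec (take j s) = (j <= drun s).
Proof.
elim: s j => [|x s IH] [|j] hj //.
case: s IH hj => [|y s] IH hj.
  by case: j hj.
case: j hj => [|j] hj.
  by rewrite /dec /=; case: ifP.
have := IH j.+1 hj; rewrite /dec /= => ->.
by case: ifP.
Qed.

Definition ins (j x : nat) (s : seq nat) := take j s ++ x :: drop j s.
Definition valid k s j :=
  dec (take j s) && ((j < k.-1) || (j == k.-1) && (nth 0 s 0 == size s)).

Lemma perm_facts n s : perm_eq s (iota 1 n) ->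
  [/\ size s = n, uniq s & forall z, (z \in s) = (0 < z <= n)].
Proof.
move=> hp; split.
- by rewrite (perm_size hp) size_iota.
- by rewrite (perm_uniq hp) iota_uniq.
- by move=> z; rewrite (perm_mem hp) mem_iota add1n ltnS.
Qed.

Lemma ltT a b : a < b -> (a < b) = true. Proof. by []. Qed.
Lemma ltF a b : b <= a -> (a < b) = false. Proof. by rewrite ltnNge => ->. Qed.

Lemma oiso123 a b c : a < b -> b < c -> order_iso [:: a; b; c] pat123.
Proof.
move=> hab hbc; apply: oisoP => // i j hi hj.
case: i hi => [|[|[|i]]] hi //; case: j hj => [|[|[|j]]] hj //=;
  first [ rewrite ltT //; lia | rewrite ltF //; lia ].
Qed.

Lemma oisoB d1 x1 d2 x2 : dec d1 -> all (fun z => z < x1) d1 ->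
  dec d2 -> all (fun z => z < x2) d2 -> size d1 = size d2 ->
  order_iso (d1 ++ [:: x1]) (d2 ++ [:: x2]).
Proof.
move=> h1 a1 h2 a2 hs; apply: oisoP; first by rewrite !size_cat hs.
move=> i j; rewrite size_cat /= addn1 => hi hj.
rewrite cmpB // cmpB ?hs //; by rewrite -hs.
Qed.

Lemma oisoA d1 x1 y1 d2 x2 y2 : dec d1 -> all (fun z => z < y1) d1 -> y1 < x1 ->
  dec d2 -> all (fun z => z < y2) d2 -> y2 < x2 -> size d1 = size d2 ->
  order_iso (d1 ++ [:: x1; y1]) (d2 ++ [:: x2; y2]).
Proof.
move=> h1 a1 b1 h2 a2 b2 hs; apply: oisoP; first by rewrite !size_cat hs.
move=> i j; rewrite size_cat /= addn2 => hi hj.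
rewrite cmpA // cmpA ?hs //; by rewrite -hs.
Qed.

Lemma dec_rev_iota m : dec (rev (iota 1 m)).
Proof. by rewrite /dec rev_sorted; exact: iota_ltn_sorted. Qed.

Lemma all_rev_iota m y : m < y -> all (fun z => z < y) (rev (iota 1 m)).
Proof. by move=> h; apply/allP => z; rewrite mem_rev mem_iota => /andP [_]; lia. Qed.

Lemma key_valid k n s j : 3 <= k -> perm_eq s (iota 1 n) -> j <= n ->
  inC k (ins j n.+1 s) -> valid k s j.
Proof.
move=> hk hp hj; have [hsz hu hm] := perm_facts hp.
rewrite /inC /avoids_all /= => /and4P [h1 h2 h3 _].
have hle : forall z, z \in s -> z <= n by move=> z; rewrite hm => /andP [].
have hd : dec (take j s).
  apply/negPn/negP => hnd; move/negP: h1; apply.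
  have [a [b [hab hlt]]] := notdec (take_uniq j hu) hnd.
  have hb : b <= n.
    apply: hle; apply: (mem_take (n0:=j)); apply: (mem_subseq hab).
    by rewrite !inE eqxx orbT.
  apply: (containsP2 (q := [:: a; b; n.+1])); last by apply: oiso123 => //; lia.
  rewrite /ins; apply: (@cat_subseq _ [:: a; b] [:: n.+1]) => //.
  by rewrite sub1seq mem_head.
rewrite /valid hd /=.
case: (ltnP j k.-1) => hjk //=.
case: (ltngtP j k.-1) => hjk2.
- by rewrite ltnNge hjk in hjk2.
- exfalso; move/negP: h3; apply.
  have hkj : k <= j by lia.
  apply: (containsP2 (q := take k s ++ [:: n.+1])).
  + rewrite /ins -(take_takel s hkj).
    apply: cat_subseq; first exact: take_subseq.
    exact: (prefix_subseq [:: n.+1]).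
  + rewrite /patB; apply: oisoB.
    * rewrite -(take_takel s hkj); exact: take_sorted.
    * by apply/allP => z /mem_take /hle; lia.
    * exact: dec_rev_iota.
    * by apply: all_rev_iota.
    * by rewrite size_takel ?size_rev ?size_iota // hsz; lia.
- rewrite /=; apply/negPn/negP => hne.
  move/negP: h2; apply.
  have hn1 : 0 < n by lia.
  have hnin : n \in s by rewrite hm hn1 leqnn.
  have hj0 : 0 < j by lia.
  have hs0 : nth 0 s 0 < n.
    have : nth 0 s 0 <= n by apply: hle; apply: mem_nth; lia.
    move/eqP: hne; rewrite hsz; lia.
  have hth : nth 0 (take j s) 0 = nth 0 s 0 by rewrite nth_take.
  have hall : forall z, z \in take j s -> z < n.
    by move=> z hz; have := dec_head hd hz; rewrite hth; lia.
  have hnd : n \in drop j s.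
    move: hnin; rewrite -{1}(cat_take_drop j s) mem_cat => /orP [h|//].
    by have := hall _ h; rewrite ltnn.
  apply: (containsP2 (q := take j s ++ [:: n.+1; n])).
  + rewrite /ins; apply: cat_subseq => //.
    change [:: n.+1; n] with ([:: n.+1] ++ [:: n]).
    change (n.+1 :: drop j s) with ([:: n.+1] ++ drop j s).
    by apply: cat_subseq => //; rewrite sub1seq.
  + rewrite /patA; apply: oisoA => //.
    * by apply/allP.
    * exact: dec_rev_iota.
    * by apply: all_rev_iota; lia.
    * by rewrite size_takel ?size_rev ?size_iota ?hsz; lia.
Qed.

Lemma nth_mid a x b : nth 0 (a ++ x :: b) (size a) = x.
Proof. by rewrite nth_cat ltnn subnn. Qed.

Lemma nth_other a x b i : i < size (a ++ x :: b) -> i != size a ->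
  nth 0 (a ++ x :: b) i \in a ++ b.
Proof.
move=> hi hne; rewrite nth_cat mem_cat; case: ltnP => h.
  by rewrite mem_nth.
have -> : i - size a = (i - size a).-1.+1 by lia.
rewrite /= mem_nth ?orbT //.
move: hi; rewrite size_cat /=; lia.
Qed.

Lemma maxpos a x b c y e : order_iso (a ++ x :: b) (c ++ y :: e) ->
  all (fun z => z < x) (a ++ b) -> all (fun z => z < y) (c ++ e) ->
  size a = size c.
Proof.
move=> ho ha hc; have hs := oiso_size ho.
case: (boolP (size a == size c)) => [/eqP //|hne].
have hi : size a < size (a ++ x :: b) by rewrite size_cat /=; lia.
have hp : size c < size (a ++ x :: b).
  by rewrite hs size_cat /=; lia.
have := oiso_cmp ho hi hp.
have h1 : nth 0 (a ++ x :: b) (size c) < x.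
  by apply: (allP ha); apply: nth_other => //; rewrite eq_sym.
have h2 : nth 0 (c ++ y :: e) (size a) < y.
  by apply: (allP hc); apply: nth_other => //; rewrite -hs.
by rewrite !nth_mid h2 ltnNge (ltnW h1).
Qed.

Lemma back_gen n s j p : perm_eq s (iota 1 n) -> ~~ contains s p ->
  contains (ins j n.+1 s) p ->
  exists q1 q2, [/\ subseq q1 (take j s), subseq q2 (drop j s)
                  & order_iso (q1 ++ n.+1 :: q2) p].
Proof.
move=> hp hnc /containsP1 [q hq ho].
have [hsz hu hm] := perm_facts hp.
have hle : forall z, z \in s -> z <= n by move=> z; rewrite hm => /andP [].
have hna : n.+1 \notin take j s by apply/negP => /mem_take /hle; lia.
have hnb : n.+1 \notin drop j s by apply/negP => /mem_drop /hle; lia.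
case: (boolP (n.+1 \in q)) => hin.
  have [q1 [q2 [e s1 s2]]] := subseq_split1 hq hna hnb hin.
  by exists q1, q2; split => //; rewrite -e.
have := subseq_split2 hq hin; rewrite cat_take_drop => hs.
by move/negP: hnc; case; apply: containsP2 hs ho.
Qed.

Lemma key_back k n s j : 3 <= k -> perm_eq s (iota 1 n) -> j <= n ->
  inC k s -> valid k s j -> inC k (ins j n.+1 s).
Proof.
move=> hk hp hj; have [hsz hu hm] := perm_facts hp.
have hle : forall z, z \in s -> z <= n by move=> z; rewrite hm => /andP [].
rewrite /inC /avoids_all /= => /and4P [h1 h2 h3 _] /andP [hd hv].
have hq1 : forall q, subseq q (take j s) -> all (fun z => z < n.+1) q.
  by move=> q hq; apply/allP => z /(mem_subseq hq) /mem_take /hle.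
have hq2 : forall q, subseq q (drop j s) -> all (fun z => z < n.+1) q.
  by move=> q hq; apply/allP => z /(mem_subseq hq) /mem_drop /hle.
have hjk : j <= k.-1.
  by case/orP: hv => [h|/andP [/eqP h _]]; lia.
rewrite andbT; apply/and3P; split.
- apply/negP => /(back_gen hp h1) [q1 [q2 [s1 s2 ho]]].
  have hs : size q1 = 2.
    apply: (maxpos (c := [:: 1; 2]) (y := 3) (e := [::]) ho) => //.
    by rewrite all_cat hq1 // hq2.
  have hdq : dec q1 := subseq_sorted gt_trans s1 hd.
  have := @oiso_cmp _ _ 0 1 ho; rewrite size_cat hs /= => /(_ isT isT).
  by rewrite !nth_cat hs /= dec_cmp ?hs.
- apply/negP => /(back_gen hp h2) [q1 [q2 [s1 s2 ho]]].
  have hs : size q1 = k.-1.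
    have hm1 := maxpos (c := rev (iota 1 k.-1)) (y := k.+1) (e := [:: k]) ho.
    rewrite size_rev size_iota in hm1; apply: hm1.
      by rewrite all_cat hq1 // hq2.
    rewrite all_cat all_rev_iota /=; lia.
  have hjk' : j = k.-1.
    have := size_subseq s1; rewrite size_takel ?hsz //; lia.
  have h0 : nth 0 s 0 == size s.
    by move: hv; rewrite hjk' ltnn eqxx.
  have eq1 : q1 = take j s.
    by apply/eqP; rewrite -(size_subseq_leqif s1).2 size_takel ?hsz // hs hjk'.
  have hsq : size (q1 ++ n.+1 :: q2) = (k.-1).+2.
    by rewrite (oiso_size ho) /patA size_cat size_rev size_iota /= addn2.
  have hq2s : size q2 = 1 by move: hsq; rewrite size_cat hs /=; lia.
  have := @oiso_cmp _ _ 0 k ho; rewrite hsq => /(_ ltac:(lia) ltac:(lia)).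
  have pa0 : nth 0 (patA k) 0 = k.-1.
    rewrite /patA nth_cat size_rev size_iota (_ : 0 < k.-1); last lia.
    rewrite nth_rev ?size_iota; last lia.
    rewrite nth_iota; lia.
  have pak : nth 0 (patA k) k = k.
    rewrite /patA nth_cat size_rev size_iota ltnNge (_ : k.-1 <= k); last lia.
    by rewrite /= (_ : k - k.-1 = 1) //; lia.
  have l0 : nth 0 (q1 ++ n.+1 :: q2) 0 = n.
    rewrite eq1 nth_cat size_takel ?hsz // (_ : 0 < j); last lia.
    by rewrite nth_take; [apply/eqP; rewrite -hsz | lia].
  have lk : nth 0 (q1 ++ n.+1 :: q2) k \in q2.
    rewrite nth_cat hs ltnNge (_ : k.-1 <= k); last lia.
    by rewrite /= (_ : k - k.-1 = 1) /=; [apply: mem_nth; lia | lia].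
  have := hle _ (mem_drop (mem_subseq s2 lk)).
  rewrite l0 pa0 pak (_ : k.-1 < k); last lia.
  lia.
- apply/negP => /(back_gen hp h3) [q1 [q2 [s1 s2 ho]]].
  have hs : size q1 = k.
    have hm1 := maxpos (c := rev (iota 1 k)) (y := k.+1) (e := [::]) ho.
    rewrite size_rev size_iota in hm1; apply: hm1.
      by rewrite all_cat hq1 // hq2.
    by rewrite cats0 all_rev_iota.
  have := size_subseq s1; rewrite size_takel ?hsz //; lia.
Qed.

Definition label k s :=
  if drun s < k.-1 then (drun s).+1
  else if nth 0 s 0 == size s then k else k.-1.

Lemma valid_label k s j : 3 <= k -> j <= size s -> valid k s j = (j < label k s).
Proof.
move=> hk hj; rewrite /valid dec_take_drun // /label.
have := drun_size s.
case: (ltnP (drun s) k.-1) => hd; case: (nth 0 s 0 =P size s) => he /= hs;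
  rewrite ?andbT ?andbF ?orbF; apply/idP/idP; lia.
Qed.

Lemma label_le k s : 3 <= k -> label k s <= (size s).+1.
Proof.
move=> hk; have := drun_size s; rewrite /label.
case: (ltnP (drun s) k.-1) => hd; case: (nth 0 s 0 =P size s) => he /= hs; lia.
Qed.

Lemma ins_perm j x s : perm_eq (ins j x s) (x :: s).
Proof. by rewrite /ins -cat1s perm_catCA cat_take_drop. Qed.

Lemma drun_cons x s : all (fun z => z < x) s -> drun (x :: s) = (drun s).+1.
Proof. by case: s => [|y s] //= /andP [-> _]. Qed.

Lemma dec_rcons_big a x : a != [::] -> all (fun z => z < x) a -> ~~ dec (a ++ [:: x]).
Proof.
case: a => [|y r] // _ ha; rewrite /dec /= cat_path /= andbT.
have := (allP ha) _ (mem_last y r) => h.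
by rewrite ltnNge (ltnW h) andbF.
Qed.

Lemma drun_ins j x s : 0 < j -> j <= drun s -> all (fun z => z < x) s ->
  drun (ins j x s) = j.
Proof.
move=> hj0 hjd ha.
have hsz := drun_size s.
have hst : size (take j s) = j by rewrite size_takel //; lia.
have hsi : size (ins j x s) = (size s).+1 by rewrite (perm_size (ins_perm j x s)).
have h1 : j <= drun (ins j x s).
  rewrite -dec_take_drun; last by rewrite hsi; lia.
  by rewrite /ins take_size_cat // dec_take_drun //; lia.
have h2 : ~~ (j.+1 <= drun (ins j x s)).
  rewrite -dec_take_drun; last by rewrite hsi; lia.
  rewrite /ins take_cat hst ltnNge leqnSn /= subSnn /= take0.
  apply: dec_rcons_big.
    by case: (take j s) hst => //= h; lia.
  by apply/allP => z /mem_take /(allP ha).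
lia.
Qed.

Lemma label_child k s j n : 3 <= k -> size s = n -> all (fun z => z <= n) s ->
  j < label k s ->
  label k (ins j n.+1 s) =
  if j == 0 then (if (drun s).+1 < k.-1 then (drun s).+2 else k)
  else (if j < k.-1 then j.+1 else k.-1).
Proof.
move=> hk hsz ha hj.
have ha' : all (fun z => z < n.+1) s by apply/allP => z /(allP ha).
have hds := drun_size s.
have hjd : j <= drun s.
  move: hj; rewrite /label.
  by case: (ltnP (drun s) k.-1) => hd; case: (nth 0 s 0 =P size s) => he /= hj'; lia.
have hsi : size (ins j n.+1 s) = n.+1 by rewrite (perm_size (ins_perm j n.+1 s)) /= hsz.
case: eqP => hj0.
  rewrite hj0 /ins take0 drop0 /= /label drun_cons //=.
  by rewrite hsz eqxx; case: ifP.
have hj0' : 0 < j by lia.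
rewrite /label drun_ins //.
have hh : nth 0 (ins j n.+1 s) 0 = nth 0 s 0.
  rewrite /ins nth_cat size_takel; last lia.
  by rewrite hj0' nth_take.
rewrite hh hsi.
have : nth 0 s 0 <= n by apply: (allP ha); apply: mem_nth; exact: leq_trans hj0' (leq_trans hjd hds).
move=> hle; rewrite (eqF (a := nth 0 s 0)); last lia.
done.
Qed.

Lemma map_iota_succ m n : [seq j.+1 | j <- iota m n] = iota m.+1 n.
Proof. by elim: n m => [|n IH] m //=; rewrite IH. Qed.

Lemma rot1 (x : nat) s : perm_eq (x :: s) (s ++ [:: x]).
Proof. by rewrite perm_sym cats1 perm_rcons. Qed.

Definition cF k s j :=
  if j == 0 then (if (drun s).+1 < k.-1 then (drun s).+2 else k)
  else (if j < k.-1 then j.+1 else k.-1).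

Lemma children_perm k s n : 3 <= k -> size s = n -> all (fun z => z <= n) s ->
  perm_eq [seq label k (ins j n.+1 s) | j <- iota 0 (label k s)]
          (children k (label k s)).
Proof.
move=> hk hsz ha.
have -> : [seq label k (ins j n.+1 s) | j <- iota 0 (label k s)] =
          [seq cF k s j | j <- iota 0 (label k s)].
  by apply/eq_in_map => j; rewrite mem_iota add0n => /andP [_ hj]; apply: label_child.
have hL : 0 < label k s by rewrite /label; case: ifP => //; case: ifP => _ _; lia.
have hds := drun_size s.
rewrite -(prednK hL) /=.
set L := (label k s).-1.
have hLdef : label k s = L.+1 by rewrite prednK.
have -> : [seq cF k s j | j <- iota 1 L] =
          [seq (if j < k.-1 then j.+1 else k.-1) | j <- iota 1 L].
  apply/eq_in_map => j; rewrite mem_iota => /andP [h _].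
  by rewrite /cF (eqF (a := j)) //; lia.
have hsucc : forall m, m <= k.-1 ->
    [seq (if j < k.-1 then j.+1 else k.-1) | j <- iota 1 m.-1] = iota 2 m.-1.
  move=> m hm; rewrite -(map_iota_succ 1); apply/eq_in_map => j.
  by rewrite mem_iota => /andP [_ h]; rewrite ifT //; lia.
rewrite /cF eqxx.
move: hLdef; rewrite /label; case: (ltnP (drun s) k.-1) => hd.
- move=> hLd'; have hLd : L = drun s by move: hLd'; lia.
  rewrite hLd; have := hsucc (drun s).+1; rewrite /= => -> //.
  have -> : (if (drun s).+1 < k.-1 then (drun s).+2 else k) = (drun s).+2.
    by case: ifP => //; lia.
  rewrite /children; case: eqP => h1.
    by rewrite h1 /=; have -> : drun s = 0 by lia.
  rewrite ifT; last lia.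
  have e := iotaD 2 (drun s) 1; rewrite addn1 in e.
  by rewrite e add2n; apply: rot1.
- have -> : (if (drun s).+1 < k.-1 then (drun s).+2 else k) = k.
    by case: ifP => //; lia.
  case: eqP => _ => hL'.
  + have eL : L = (k - 2) + 1 by lia.
    rewrite -hL' eL iotaD map_cat.
    rewrite (_ : k - 2 = (k - 2).+1.-1) // hsucc; last lia.
    rewrite /= ifF; last lia.
    rewrite /children (eqF (a := k)); last lia.
    rewrite ltnn eqxx.
    by rewrite -[[:: k.-1; k]]/([:: k.-1] ++ [:: k]) catA; apply: rot1.
  + have eL : L = (k - 2).+1.-1 by lia.
    rewrite -hL' eL hsucc; last lia.
    rewrite /children (eqF (a := k.-1)); last lia.
    rewrite ifT; last lia.
    rewrite (_ : k.-1 = (k - 2) + 1); last lia.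
    by rewrite iotaD (_ : 2 + (k - 2) = k); [apply: rot1 | lia].
Qed.

Lemma inC_sub k j x s : inC k (ins j x s) -> inC k s.
Proof.
rewrite /inC /avoids_all /= => /and4P [h1 h2 h3 _].
have hs : subseq s (ins j x s).
  by rewrite /ins -{1}(cat_take_drop j s); apply: cat_subseq => //; exact: subseq_cons.
rewrite andbT; apply/and3P; split.
- by apply: contraNN h1; exact: contains_sub hs.
- by apply: contraNN h2; exact: contains_sub hs.
- by apply: contraNN h3; exact: contains_sub hs.
Qed.

Lemma contains_nil p : contains [::] p -> p = [::].
Proof.
case/containsP1 => q; rewrite subseq0 => /eqP -> /oiso_size /= h.
by case: p h.
Qed.

Lemma inC_nil k : inC k [::].
Proof.
rewrite /inC /avoids_all /= andbT; apply/and3P; split.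
- by apply/negP => /contains_nil.
- by apply/negP => /contains_nil /(congr1 size); rewrite /patA size_cat /= addn2.
- by apply/negP => /contains_nil /(congr1 size); rewrite /patB size_cat /= addn1.
Qed.

Lemma iota_perm n : perm_eq (n.+1 :: iota 1 n) (iota 1 n.+1).
Proof.
have e := iotaD 1 n 1; rewrite addn1 in e.
by rewrite e add1n /= cats1 perm_sym perm_rcons.
Qed.

Lemma decomp n p j : perm_eq p (iota 1 n.+1) -> j < size p -> nth 0 p j = n.+1 ->
  p = ins j n.+1 (take j p ++ drop j.+1 p) /\
  perm_eq (take j p ++ drop j.+1 p) (iota 1 n) /\ j <= n.
Proof.
move=> hp hj hn.
have hsz : size p = n.+1 by rewrite (perm_size hp) size_iota.
have hst : size (take j p) = j by rewrite size_takel // ltnW.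
have he : p = ins j n.+1 (take j p ++ drop j.+1 p).
  rewrite /ins take_size_cat // drop_size_cat //.
  by rewrite -hn -drop_nth // cat_take_drop.
split => //; split; last by move: hj; rewrite hsz; lia.
have := ins_perm j n.+1 (take j p ++ drop j.+1 p); rewrite -he => hq.
rewrite -(perm_cons n.+1).
apply: (@perm_trans _ p); first by rewrite perm_sym.
apply: perm_trans hp _; rewrite perm_sym; exact: iota_perm.
Qed.

Lemma ins_inj x s1 s2 j1 j2 : x \notin s1 -> x \notin s2 ->
  j1 <= size s1 -> j2 <= size s2 -> ins j1 x s1 = ins j2 x s2 ->
  s1 = s2 /\ j1 = j2.
Proof.
move=> h1 h2 hj1 hj2 e.
have hidx : forall j s, x \notin s -> j <= size s -> index x (ins j x s) = j.
  move=> j s hs hj; rewrite /ins index_cat.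
  have -> : (x \in take j s) = false by apply/negbTE; apply: contra hs => /mem_take.
  by rewrite size_takel //= eqxx addn0.
have ej : j1 = j2 by rewrite -(hidx j1 s1) // e hidx.
split => //; subst j2.
move/eqP: e; rewrite /ins eqseq_cat; last by rewrite !size_takel.
case/andP=> /eqP ht /eqP [hd].
by rewrite -(cat_take_drop j1 s1) ht hd cat_take_drop.
Qed.

Lemma uniq_flatten_map (S T : eqType) (f : S -> seq T) s : uniq s ->
  {in s, forall x, uniq (f x)} ->
  (forall x y z, x \in s -> y \in s -> z \in f x -> z \in f y -> x = y) ->
  uniq (flatten (map f s)).
Proof.
elim: s => [|x s IH] //= /andP [hx hs] hu hd.
rewrite cat_uniq hu ?mem_head //=; apply/andP; split.
  apply/hasPn => z /flatten_mapP [y hy hzy]; apply/negP => hzx.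
  have hy' : y \in x :: s by rewrite inE hy orbT.
  have e := hd x y z (mem_head _ _) hy' hzx hzy.
  by rewrite e hy in hx.
apply: IH => //.
  by move=> y hy; apply: hu; rewrite inE hy orbT.
by move=> y1 y2 z hy1 hy2; apply: hd; rewrite inE ?hy1 ?hy2 orbT.
Qed.

Lemma step k n : 3 <= k ->
  perm_eq [seq s <- permutations (iota 1 n.+1) | inC k s]
    (flatten [seq [seq ins j n.+1 s | j <- iota 0 (label k s)]
             | s <- [seq s <- permutations (iota 1 n) | inC k s]]).
Proof.
move=> hk; apply: uniq_perm.
- exact: filter_uniq (permutations_uniq _).
- apply: uniq_flatten_map.
  + exact: filter_uniq (permutations_uniq _).
  + move=> s; rewrite mem_filter mem_permutations => /andP [_ hs].
    have [hsz hu hm] := perm_facts hs.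
    have hnx : n.+1 \notin s by rewrite hm ltnn andbF.
    have hl := label_le s hk.
    rewrite map_inj_in_uniq ?iota_uniq // => j1 j2.
    rewrite !mem_iota !add0n => /andP [_ h1] /andP [_ h2] e.
    by case: (ins_inj hnx hnx _ _ e) => //; rewrite -ltnS;
      [exact: leq_trans h1 hl | exact: leq_trans h2 hl].
  + move=> s1 s2 z; rewrite !mem_filter !mem_permutations.
    move=> /andP [_ hs1] /andP [_ hs2] /mapP [j1 hj1 ->] /mapP [j2 hj2 e].
    have [hsz1 _ hm1] := perm_facts hs1.
    have [hsz2 _ hm2] := perm_facts hs2.
    have hl1 := label_le s1 hk; have hl2 := label_le s2 hk.
    move: hj1 hj2; rewrite !mem_iota !add0n => /andP [_ h1] /andP [_ h2].
    case: (ins_inj (x := n.+1) (s1 := s1) (s2 := s2) (j1 := j1) (j2 := j2)) => //.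
    * by rewrite hm1 ltnn andbF.
    * by rewrite hm2 ltnn andbF.
    * by rewrite -ltnS; exact: leq_trans h1 hl1.
    * by rewrite -ltnS; exact: leq_trans h2 hl2.
- move=> p; rewrite mem_filter mem_permutations; apply/andP/flatten_mapP.
  + case=> hin hp.
    have hnp : n.+1 \in p by rewrite (perm_mem hp) mem_iota add1n ltnSn.
    have hj : index n.+1 p < size p by rewrite index_mem.
    have [he [hs hjn]] := decomp hp hj (nth_index 0 hnp).
    move: he hs; set s := take _ p ++ drop _ p => he hs.
    rewrite he in hin.
    have hv := key_valid hk hs hjn hin.
    exists s; first by rewrite mem_filter mem_permutations hs andbT; exact: inC_sub hin.
    apply/mapP; exists (index n.+1 p); last exact: he.
    rewrite mem_iota add0n /= -valid_label //.
    by rewrite (perm_size hs) size_iota.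
  + case=> s; rewrite mem_filter mem_permutations => /andP [hins hs] /mapP [j hj ->].
    have [hsz hu hm] := perm_facts hs.
    move: hj; rewrite mem_iota add0n => /andP [_ hj].
    have hjn : j <= n by rewrite -ltnS -hsz; exact: leq_trans hj (label_le s hk).
    split.
    * by apply: key_back => //; rewrite valid_label // hsz.
    * apply: perm_trans (ins_perm j n.+1 s) _.
      apply: perm_trans _ (iota_perm n); by rewrite perm_cons.
Qed.

Lemma perm_flatten_map_in (S T : eqType) (f g : S -> seq T) s :
  {in s, forall x, perm_eq (f x) (g x)} ->
  perm_eq (flatten (map f s)) (flatten (map g s)).
Proof.
elim: s => [|x s IH] //= h.
apply: perm_cat; first by apply: h; rewrite mem_head.
by apply: IH => y hy; apply: h; rewrite inE hy orbT.
Qed.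

Lemma LS k n : 3 <= k ->
  perm_eq [seq label k s | s <- [seq s <- permutations (iota 1 n) | inC k s]]
          (level k n).
Proof.
move=> hk; elim: n => [|n IH].
  have -> : permutations (iota 1 0) = [:: [::]] by [].
  rewrite /= inC_nil /= /label /= ifT //; lia.
apply: perm_trans (perm_map (label k) (step n hk)) _.
apply: (@perm_trans _ (flatten [seq children k (label k s)
          | s <- [seq s <- permutations (iota 1 n) | inC k s]])).
  rewrite map_flatten -map_comp.
  apply: perm_flatten_map_in => s; rewrite mem_filter mem_permutations.
  move=> /andP [_ hs]; have [hsz _ hm] := perm_facts hs.
  rewrite /= -map_comp; apply: children_perm => //.
  by apply/allP => z; rewrite hm => /andP [_].
rewrite /= (map_comp (children k) (label k)).
exact: perm_flatten (perm_map _ IH).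
Qed.

Theorem mainTheorem7 (k : nat) (hk : 3 <= k) :
  (forall (n : nat) (p : seq nat) (l : nat),
      1 <= n -> is_perm_n n p -> inC k p ->
      1 <= l <= n -> nth 0 p l.-1 = n -> l <= k) /\
  (forall n : nat, countC k n = tree_count k n).
Proof.
split.
- move=> n p l hn hp hin /andP [hl1 hln] hnth.
  case: n hn hp hnth hln => [//|m] _ hp hnth hln.
  have hsz : size p = m.+1 by rewrite (perm_size hp) size_iota.
  have hj : l.-1 < size p by rewrite hsz; lia.
  have [he [hs hjn]] := decomp hp hj hnth.
  rewrite he in hin.
  have := key_valid hk hs hjn hin.
  rewrite /valid => /andP [_ hv].
  case/orP: hv => [h|/andP [/eqP h _]]; lia.
- move=> n.
  rewrite /countC -size_filter /tree_count -(perm_size (LS n hk)) size_map.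
  done.
Qed.
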